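(* For every $n\ge1$ and every subset $A\subseteq\{-1,1\}^n$, $$\Big\|\sum_{x\in A}x\Big\|_2\le 2^{n-1},$$ and equality holds when $A=\{x\in\{-1,1\}^n: x_i=c\}$ for some fixed coordinate $i$ and fixed sign $c\in\{-1,1\}$. *)

(* Defs.v *)
From mathcomp Require Import all_boot all_order all_algebra.
From mathcomp Require Import reals.
Set Implicit Arguments. Unset Strict Implicit. Unset Printing Implicit Defensive.
Import Order.TTheory GRing.Theory Num.Theory.
Local Open Scope ring_scope.

(* A point of the discrete cube {-1,1}^n is encoded by b : {ffun 'I_n -> bool},
   with coordinate j equal to +1 if b j is true and -1 otherwise. *)
Definition sgn (R : pzRingType) (b : bool) : R := if b then 1 else -1.

Definition cube_pt (R : pzRingType) (n : nat) (x : {ffun 'I_n -> bool}) : 'rV[R]_n :=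
  \row_j sgn R (x j).

Definition norm2 (R : realType) (n : nat) (v : 'rV[R]_n) : R :=
  Num.sqrt (\sum_(j < n) v ord0 j ^+ 2).

Definition cube_sum (R : pzRingType) (n : nat) (A : {set {ffun 'I_n -> bool}}) : 'rV[R]_n :=
  \sum_(x in A) cube_pt R x.

(* Main.v *)
Require Import Defs.
From mathcomp Require Import all_boot all_order all_algebra.
From mathcomp Require Import reals ring lra.
Import Order.TTheory GRing.Theory Num.Theory.
Local Open Scope ring_scope.
Set Implicit Arguments. Unset Strict Implicit.

Definition fl n (j : 'I_n) (x : {ffun 'I_n -> bool}) : {ffun 'I_n -> bool} :=
  [ffun k => if k == j then ~~ x k else x k].

Lemma flK n (j : 'I_n) : involutive (fl j).
Proof.
move=> x; apply/ffunP=> k; rewrite !ffunE; case: eqP => // _; by rewrite negbK.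
Qed.

Lemma flip_zero (R : realType) n (j : 'I_n) (f : {ffun 'I_n -> bool} -> R) :
  (forall x, f (fl j x) = f x) -> \sum_(x : {ffun 'I_n -> bool}) sgn R (x j) * f x = 0.
Proof.
move=> hf; set s := LHS.
have: s = - s.
  rewrite {1}/s (reindex_inj (inv_inj (flK j))) /= -sumrN; apply: eq_bigr=> x _.
  by rewrite hf ffunE eqxx /sgn; case: (x j); rewrite /= ?mul1r ?mulN1r ?opprK.
move=> h; lra.
Qed.

Lemma cs (R : realType) (I : finType) (a : I -> R) : (0 < #|I|)%N ->
  (\sum_i a i) ^+ 2 <= #|I|%:R * \sum_i a i ^+ 2.
Proof.
move=> hI; set N : R := #|I|%:R; set T := \sum_i a i; set U := \sum_i a i ^+ 2.
have hN : 0 < N by rewrite ltr0n.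
have h0 : 0 <= \sum_i (N * a i - T) ^+ 2 by apply: sumr_ge0 => i _; exact: sqr_ge0.
have e : \sum_i (N * a i - T) ^+ 2 = N * (N * U - T ^+ 2).
  under eq_bigr => i _ do rewrite sqrrB exprMn mulr2n.
  rewrite !big_split /= !sumrN big_split /= -!mulr_sumr -!mulr_suml sumr_const -/T -/U.
  have -> : #|[pred i : I | true]| = #|I| by apply: eq_card.
  rewrite -mulr_natr -/N -mulr_sumr -/T. ring.
rewrite e in h0.
have : 0 <= N * U - T ^+ 2 by rewrite -(pmulr_rge0 _ hN).
lra.
Qed.

Lemma sum1 (R : realType) (I : finType) : \sum_(i : I) (1 : R) = #|I|%:R.
Proof. by rewrite sumr_const; congr (_ *+ _); apply: eq_card. Qed.

Lemma sgn2 (R : realType) b : sgn R b * sgn R b = 1.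
Proof. by case: b; rewrite /sgn ?mul1r ?mulN1r ?opprK. Qed.

Lemma orth (R : realType) n (j k : 'I_n) :
  \sum_(x : {ffun 'I_n -> bool}) sgn R (x j) * sgn R (x k) =
  if j == k then #|{ffun 'I_n -> bool}|%:R else 0.
Proof.
case: eqP => [<-|/eqP hjk].
  by under eq_bigr => x _ do rewrite sgn2; rewrite sum1.
apply: flip_zero => x; rewrite ffunE.
by rewrite eq_sym (negbTE hjk).
Qed.

Lemma cube_sumE (R : realType) n (A : {set {ffun 'I_n -> bool}}) j :
  cube_sum R A ord0 j = \sum_(x in A) sgn R (x j).
Proof. by rewrite /cube_sum summxE; apply: eq_bigr => x _; rewrite mxE. Qed.

Lemma norm2E (R : realType) n (A : {set {ffun 'I_n -> bool}}) :
  norm2 (cube_sum R A) = Num.sqrt (\sum_j (\sum_(x in A) sgn R (x j)) ^+ 2).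
Proof. by rewrite /norm2; congr Num.sqrt; apply: eq_bigr => j _; rewrite cube_sumE. Qed.

Lemma part1 (R : realType) n (A : {set {ffun 'I_n -> bool}}) (M : R) :
  0 <= M -> #|{ffun 'I_n -> bool}|%:R = 2 * M ->
  norm2 (cube_sum R A) <= M.
Proof.
move=> hM hN; rewrite norm2E.
set S := fun j : 'I_n => \sum_(x in A) sgn R (x j).
set Q := \sum_j S j ^+ 2.
set t := fun x : {ffun 'I_n -> bool} => \sum_j sgn R (x j) * S j.
set N : R := #|{ffun 'I_n -> bool}|%:R.
have hQ0 : 0 <= Q by apply: sumr_ge0 => j _; exact: sqr_ge0.
have ea : Q = \sum_(x in A) t x.
  rewrite /Q /t exchange_big /=; apply: eq_bigr => j _.
  by rewrite expr2 {2}/S mulr_sumr; apply: eq_bigr => x _; rewrite mulrC.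
have eb : \sum_x t x = 0.
  rewrite /t exchange_big /= big1 // => j _.
  rewrite -mulr_suml.
  have -> : \sum_(x : {ffun 'I_n -> bool}) sgn R (x j) = \sum_(x : {ffun 'I_n -> bool}) sgn R (x j) * 1.
    by apply: eq_bigr => x _; rewrite mulr1.
  by rewrite flip_zero ?mul0r.
have ec : \sum_x t x ^+ 2 = N * Q.
  rewrite /Q mulr_sumr.
  transitivity (\sum_(x : {ffun 'I_n -> bool}) \sum_(j < n) \sum_(k < n) (sgn R (x j) * S j) * (sgn R (x k) * S k)).
    apply: eq_bigr => x _; rewrite expr2 /t mulr_suml; apply: eq_bigr => j _.
    by rewrite mulr_sumr.
  rewrite exchange_big /=; apply: eq_bigr => j _.
  rewrite exchange_big /=.
  transitivity (\sum_k (if j == k then N else 0) * (S j * S k)).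
    apply: eq_bigr => k _; rewrite -orth mulr_suml; apply: eq_bigr => x _.
    by rewrite mulrACA.
  rewrite (bigD1 j) //= eqxx big1 ?addr0 ?expr2 // => k hk.
  by rewrite eq_sym (negbTE hk) mul0r.
set T := \sum_x `|t x|.
have hT0 : 0 <= T by apply: sumr_ge0 => x _.
have hd : Q <= T / 2.
  rewrite ea.
  apply: (@le_trans _ _ (\sum_(x in A) (t x + `|t x|) / 2)).
    apply: ler_sum => x _; have := ler_norm (t x); lra.
  apply: (@le_trans _ _ (\sum_x (t x + `|t x|) / 2)).
    rewrite [X in _ <= X](bigID (fun x => x \in A)) /= lerDl.
    apply: sumr_ge0 => x _; have := ler_norm (- t x); rewrite normrN; lra.
  by rewrite -mulr_suml big_split /= eb add0r.
have hpos : (0 < #|{ffun 'I_n -> bool}|)%N by rewrite card_ffun card_ord card_bool expn_gt0.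
have hcs := @cs R {ffun 'I_n -> bool} (fun x => `|t x|) hpos.
have hcs' : T ^+ 2 <= N * (N * Q).
  rewrite -ec /T; move: hcs.
  have -> : \sum_x `|t x| ^+ 2 = \sum_x t x ^+ 2 by apply: eq_bigr => x _; rewrite real_normK ?num_real.
  by move=> h; apply: h.
move: hcs'; rewrite /N hN => hcs'.
rewrite -(ger0_norm hM) -sqrtr_sqr ler_sqrt ?sqr_ge0 //.
nra.
Qed.

Lemma part2 (R : realType) n (i : 'I_n) (c : bool) (M : R) :
  0 <= M -> #|{ffun 'I_n -> bool}|%:R = 2 * M ->
  norm2 (cube_sum R [set x : {ffun 'I_n -> bool} | x i == c]) = M.
Proof.
move=> hM hN; rewrite norm2E.
set a := \sum_(x : {ffun 'I_n -> bool}) (x i == c)%:R : R.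
have hS : forall j, \sum_(x in [set x : {ffun 'I_n -> bool} | x i == c]) sgn R (x j)
   = \sum_(x : {ffun 'I_n -> bool}) sgn R (x j) * (x i == c)%:R.
  move=> j; rewrite big_mkcond /=; apply: eq_bigr => x _; rewrite inE.
  by case: (x i == c); rewrite ?mulr1 ?mulr0.
have ha : a = M.
  have e1 : a = \sum_(x : {ffun 'I_n -> bool}) (x i == ~~ c)%:R.
    rewrite /a (reindex_inj (inv_inj (flK i))) /=; apply: eq_bigr => x _.
    by rewrite ffunE eqxx; case: (x i); case: (c).
  have e2 : a + a = #|{ffun 'I_n -> bool}|%:R.
    rewrite {2}e1 /a -big_split /= -sum1; apply: eq_bigr => x _.
    by case: (x i); case: (c); rewrite /= ?addr0 ?add0r.
  move: e2; rewrite hN; lra.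
rewrite (bigD1 i) //= [X in _ + X]big1 ?addr0.
  rewrite hS.
  have -> : \sum_(x : {ffun 'I_n -> bool}) sgn R (x i) * (x i == c)%:R = sgn R c * a.
    rewrite /a mulr_sumr; apply: eq_bigr => x _.
    by case: eqP => [->|]; rewrite ?mulr1 ?mulr0.
  rewrite exprMn expr2 sgn2 mul1r.
  by rewrite sqrtr_sqr ha ger0_norm.
move=> j hj; rewrite hS flip_zero ?expr0n // => x; rewrite ffunE (eq_sym i) (negbTE hj).
by [].
Qed.

Theorem theorem5 (R : realType) (n : nat) (hn : (1 <= n)%N) :
  (forall A : {set {ffun 'I_n -> bool}},
      norm2 (cube_sum R A) <= 2 ^+ n.-1) /\
  (forall (i : 'I_n) (c : bool),
      norm2 (cube_sum R [set x : {ffun 'I_n -> bool} | x i == c]) = 2 ^+ n.-1).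
Proof.
have hM : 0 <= (2 : R) ^+ n.-1 by apply: exprn_ge0.
have hN : #|{ffun 'I_n -> bool}|%:R = 2 * (2 : R) ^+ n.-1.
  rewrite card_ffun card_ord card_bool natrX -exprS prednK //.
split=> [A|i c]; [exact: part1 | exact: part2].
Qed.
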